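(* For all integers $n, k \geq 1$ with $n \geq k$, $$\sum_{i=k}^{n} \frac{S(n-1,i-1)\, s(i,k)}{i} = \frac{1}{n}\binom{n}{k} B_{n-k}.$$
   Context: For $n \geq 0$, $X^{\underline{n}} := X(X-1)\cdots(X-n+1)$ ($X^{\underline{0}}=1$). The (signed) Stirling numbers of the first kind $s(n,k)$ are defined by $X^{\underline{n}} = \sum_{k=0}^{n} s(n,k) X^k$, and the Stirling numbers of the second kind $S(n,k)$ by $X^n = \sum_{k=0}^{n} S(n,k) X^{\underline{k}}$ (for all $n\ge 0$), with $s(n,k)=S(n,k)=0$ when $n<k$. The Bernoulli numbers $B_n$ are defined by $\frac{t}{e^t-1} = \sum_{n\ge 0} B_n \frac{t^n}{n!}$. *)

(* Defs.v *)
From mathcomp Require Import all_boot all_order all_algebra.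
Set Implicit Arguments. Unset Strict Implicit. Unset Printing Implicit Defensive.
Import Order.TTheory GRing.Theory Num.Theory.
Local Open Scope ring_scope.

Definition falling_poly (n : nat) : {poly rat} :=
  \prod_(i < n) ('X - (i%:R)%:P).

(* Signed Stirling numbers of the first kind: X^{\underline n} = sum_k s(n,k) X^k. *)
Definition stirling1 (n k : nat) : rat := (falling_poly n)`_k.

(* Stirling numbers of the second kind, via the standard recurrence
   S(0,0)=1, S(0,k+1)=0, S(n+1,0)=0, S(n+1,k+1) = (k+1) S(n,k+1) + S(n,k),
   which is equivalent to X^n = sum_k S(n,k) X^{\underline k}. *)
Fixpoint stirling2 (n k : nat) : rat :=
  match n, k with
  | 0, 0 => 1
  | 0, _.+1 => 0
  | _.+1, 0 => 0
  | n'.+1, k'.+1 => (k'.+1)%:R * stirling2 n' k'.+1 + stirling2 n' k'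
  end.

(* Bernoulli numbers with t/(e^t-1) = sum B_n t^n/n!.  Comparing coefficients
   of t^{n+1}/(n+1)! in (e^t - 1) * sum B_j t^j/j! = t gives
   sum_{j<=n} C(n+1,j) B_j = [n = 0], i.e.
   B_n = ([n=0] - sum_{j<n} C(n+1,j) B_j) / (n+1). *)
Fixpoint bern_seq (n : nat) : seq rat :=
  match n with
  | 0 => [:: 1]
  | n'.+1 =>
      let s := bern_seq n' in
      rcons s (- (\sum_(j < n'.+1) ('C(n'.+2, j))%:R * s`_j) / (n'.+2)%:R)
  end.

Definition bernoulli (n : nat) : rat := (bern_seq n)`_n.

(* Main.v *)
Require Import Defs.
From mathcomp Require Import all_boot all_order all_algebra.
From mathcomp Require Import ring lra zify.
Import GRing.Theory Num.Theory.
Local Open Scope ring_scope.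


Lemma size_falling i : size (falling_poly i) = i.+1.
Proof. by rewrite /falling_poly size_prod_XsubC -(filter_predT (index_enum _)) deprecated_filter_index_enum -cardE card_ord. Qed.

Lemma stirling1_small i k : (i < k)%N -> stirling1 i k = 0.
Proof. by move=> h; rewrite /stirling1 nth_default // size_falling. Qed.

Lemma falling_eval i m : (falling_poly i).[m%:R] = (m ^_ i)%:R.
Proof.
elim: i => [|i IH]; first by rewrite /falling_poly big_ord0 hornerC ffactn0.
rewrite /falling_poly big_ord_recr /= hornerM -/(falling_poly i) IH.
rewrite !hornerE ffactnSr natrM.
case: (leqP i m) => h; first by rewrite natrB.
by rewrite ffact_small // !mul0r.
Qed.

Lemma ffact_diff m j : ((m.+1 ^_ j.+1)%:R - (m ^_ j.+1)%:R : rat) = j.+1%:R * (m ^_ j)%:R.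
Proof.
rewrite ffactSS ffactnSr !natrM.
case: (leqP j m) => h; last by rewrite (ffact_small h) !mulr0 !mul0r subrr.
rewrite natrB // -addn1 natrD; ring.
Qed.

Lemma stirling2_big N k : (N < k)%N -> stirling2 N k = 0.
Proof.
elim: N k => [|N IH] [|k] //= h.
by rewrite !IH ?mulr0 ?add0r // ltnW.
Qed.

Lemma stirling2_pow N m :
  \sum_(j < N.+1) stirling2 N j * (m ^_ j)%:R = (m%:R : rat) ^+ N.
Proof.
elim: N => [|N IH]; first by rewrite big_ord_recl big_ord0 /= ffactn0 mulr1 addr0.
rewrite exprS -IH mulr_sumr big_ord_recl /= mul0r add0r.
have e j : (m%:R : rat) * (m ^_ j)%:R = (m ^_ j.+1)%:R + j%:R * (m ^_ j)%:R.
  rewrite ffactnSr natrM.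
  case: (leqP j m) => h; last by rewrite ffact_small // !mulr0 mul0r addr0.
  by rewrite natrB //; ring.
under [RHS]eq_bigr => j _ do rewrite mulrCA e mulrDr.
under eq_bigr => i _ do rewrite add0n /bump leq0n add1n mulrDl.
rewrite !big_split /= addrC; congr (_ + _).
rewrite big_ord_recr [RHS]big_ord_recl /= stirling2_big // mulr0 !mul0r addr0 mulr0 add0r.
apply: eq_bigr => j _; rewrite /bump leq0n add1n; ring.
Qed.

Lemma size_bern n : size (bern_seq n) = n.+1.
Proof. by elim: n => //= n IH; rewrite size_rcons IH. Qed.

Lemma bern_prefix N n j : (n <= N)%N -> (j <= n)%N -> (bern_seq N)`_j = (bern_seq n)`_j.
Proof.
elim: N => [|N IH] hn hj; first by move: hn; rewrite leqn0 => /eqP->.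
move: hn; rewrite leq_eqVlt => /orP[/eqP<-//|h].
by rewrite /= nth_rcons size_bern ifT ?IH // ltnS (leq_trans hj).
Qed.

Lemma bern_nth N j : (j <= N)%N -> (bern_seq N)`_j = bernoulli j.
Proof. by move=> h; rewrite /bernoulli (bern_prefix N j j h (leqnn j)). Qed.

Lemma bern_rec N : \sum_(j < N.+2) ('C(N.+2, j))%:R * bernoulli j = 0.
Proof.
rewrite big_ord_recr /=.
have -> : bernoulli N.+1 = - (\sum_(j < N.+1) ('C(N.+2, j))%:R * bernoulli j) / (N.+2)%:R.
  rewrite /bernoulli /= nth_rcons size_bern ltnn eqxx.
  congr (- _ / _); apply: eq_bigr => j _; rewrite bern_nth //; exact: ltnSE (ltn_ord j).
rewrite binSn; set S := \sum_(j < _) _.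
have h0 : (N.+2)%:R != 0 :> rat by rewrite pnatr_eq0.
field; by rewrite -natr1 addrC -natrD in h0 *.
Qed.

Lemma bern_sum N : \sum_(j < N.+1) ('C(N, j))%:R * bernoulli j = bernoulli N + (N == 1%N)%:R.
Proof.
rewrite big_ord_recr /= binn mul1r addrC; congr (_ + _).
case: N => [|[|N]]; first by rewrite big_ord0.
  by rewrite big_ord1 bin0 mul1r.
exact: bern_rec.
Qed.


Lemma bin_swap n r l : ('C(n, r) * 'C(n - r, l) = 'C(n, l) * 'C(n - l, r))%N.
Proof.
case: (leqP r n) => hr; last first.
  by rewrite (@bin_small n r) // (@bin_small (n - l) r) ?muln0 //; lia.
case: (leqP l n) => hl; last first.
  by rewrite (@bin_small n l) // (@bin_small (n - r) l) ?muln0 //; lia.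
case: (leqP (r + l) n) => h; last first.
  rewrite (@bin_small (n - r) l); last by lia.
  by rewrite (@bin_small (n - l) r) ?muln0 //; lia.
have h1 := @bin_fact n r ltac:(lia).
have h2 := @bin_fact (n - r) l ltac:(lia).
have h3 := @bin_fact n l ltac:(lia).
have h4 := @bin_fact (n - l) r ltac:(lia).
have e : (n - l - r = n - r - l)%N by lia.
rewrite e in h4.
set X := ((n - r - l)`!)%N in h2 h4.
have K : (0 < r`! * l`! * X)%N by rewrite !muln_gt0 !fact_gt0.
apply/eqP; rewrite -(eqn_pmul2r K); apply/eqP.
transitivity ('C(n, r) * (r`! * ('C(n - r, l) * (l`! * X))))%N; first by ring.
rewrite h2 h1 -h3 -h4; ring.
Qed.

Lemma key n l : (l <= n)%N ->
  \sum_(k < n.+1) ('C(n, k))%:R * bernoulli (n - k)%N * ('C(k, l))%:R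
  = ('C(n, l))%:R * (bernoulli (n - l)%N + ((n - l)%N == 1%N)%:R) :> rat.
Proof.
move=> hl.
rewrite -(big_mkord xpredT (fun k => ('C(n, k))%:R * bernoulli (n - k)%N * ('C(k, l))%:R)).
rewrite big_nat_rev /=.
rewrite (@eq_big_nat _ _ _ 0 n.+1 _ (fun k => ('C(n, l))%:R * (('C(n - l, k))%:R * bernoulli k))); last first.
  move=> k /andP[_ hk]; rewrite add0n subSS.
  rewrite bin_sub; last by lia.
  have -> : (n - (n - k) = k)%N by lia.
  rewrite [_ * bernoulli k]mulrC -mulrA -natrM bin_swap natrM; ring.
rewrite -mulr_sumr; congr (_ * _).
rewrite (@big_cat_nat _ _ _ (n - l).+1) //=; last by lia.
rewrite [X in _ + X]big1_seq ?addr0; last first.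
  by move=> k; rewrite mem_index_iota => /and3P[_ hk _]; rewrite bin_small ?mul0r.
by rewrite big_mkord bern_sum.
Qed.

Lemma poly_nat0 (p : {poly rat}) : (forall m : nat, p.[m%:R] = 0) -> p = 0.
Proof.
move=> h; apply/eqP; apply: contraT => hp.
have := max_poly_roots hp (rs := [seq i%:R | i <- iota 0 (size p)]).
rewrite size_map size_iota ltnn; apply.
  by apply/allP => x /mapP[i _ ->]; rewrite /root h.
by rewrite map_inj_uniq ?iota_uniq //; apply: mulrIn; rewrite oner_neq0.
Qed.

Lemma expD1_wide (x : rat) n k : (k <= n)%N ->
  (x + 1) ^+ k = \sum_(l < n.+1) ('C(k, l))%:R * x ^+ l.
Proof.
move=> hk; rewrite exprD1n (big_ord_widen n.+1 (fun l => x ^+ l *+ 'C(k, l))) //.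
rewrite big_mkcond /=; apply: eq_bigr => l _.
case: ifP => hl; first by rewrite mulr_natl.
by rewrite bin_small ?mul0r //; lia.
Qed.

Definition qc n k : rat := ('C(n.+1, k))%:R * bernoulli (n.+1 - k)%N / (n.+1)%:R.
Definition Qp n : {poly rat} := \poly_(k < n.+2) qc n k.

Lemma Q_diff n (m : nat) : (Qp n).[m.+1%:R] - (Qp n).[m%:R] = m%:R ^+ n.
Proof.
set x : rat := m%:R.
rewrite /Qp !horner_poly (_ : m.+1%:R = x + 1); last by rewrite natr1.
under eq_bigr => k _ do rewrite (@expD1_wide x n.+1 k (ltnSE (ltn_ord k))) mulr_sumr.
rewrite exchange_big /= -sumrB.
have hn0 : (n.+1)%:R != 0 :> rat by rewrite pnatr_eq0.
have inner (l : 'I_n.+2) : \sum_(k < n.+2) qc n k * (('C(k, l))%:R * x ^+ l) - qc n l * x ^+ l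
    = ((l : nat) == n)%:R * x ^+ l.
  transitivity ((\sum_(k < n.+2) ('C(n.+1, k))%:R * bernoulli (n.+1 - k)%N * ('C(k, l))%:R)
                 * x ^+ l / (n.+1)%:R - qc n l * x ^+ l).
    congr (_ - _); rewrite !mulr_suml; apply: eq_bigr => k _; rewrite /qc; ring.
  rewrite key; last exact: ltnSE (ltn_ord l).
  rewrite /qc.
  have hl := ltn_ord l.
  case: (eqVneq (l : nat) n) => e.
    by rewrite e subSnn eqxx binSn; field; rewrite addrC natr1.
  rewrite (_ : ((n.+1 - l)%N == 1%N) = false); last by apply/negbTE; lia.
  by rewrite addr0 mul0r; field; rewrite addrC natr1.
under eq_bigr => l _ do rewrite inner.
rewrite (bigD1 (Ordinal (leqW (ltnSn n)) : 'I_n.+2)) ?inE //= eqxx mul1r big1 ?addr0 //.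
move=> l /eqP hl; case: eqP => e; last by rewrite mul0r.
by case: hl; apply: val_inj.
Qed.

Definition Pp n : {poly rat} := \sum_(i < n.+2) (stirling2 n i.-1 / i%:R) *: falling_poly i.

Lemma P_eval n m : (Pp n).[m%:R] = \sum_(i < n.+2) stirling2 n i.-1 / i%:R * (m ^_ i)%:R.
Proof. by rewrite /Pp horner_sum; apply: eq_bigr => i _; rewrite hornerZ falling_eval. Qed.

Lemma P_diff n m : (Pp n).[m.+1%:R] - (Pp n).[m%:R] = m%:R ^+ n.
Proof.
rewrite !P_eval -sumrB big_ord_recl /= !ffactn0 subrr add0r.
rewrite -stirling2_pow; apply: eq_bigr => j _.
rewrite /bump leq0n add1n add0n -mulrBr ffact_diff; field.
by rewrite addrC natr1 pnatr_eq0.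
Qed.

Lemma P0 n : (Pp n).[0%:R] = 0.
Proof.
rewrite P_eval big1 // => -[[|i] hi] _ /=; first by rewrite invr0 mulr0 mul0r.
by rewrite ffact0n /= mulr0.
Qed.

Theorem corollary2 (n k : nat) (hk : (1 <= k)%N) (hkn : (k <= n)%N) :
  \sum_(k <= i < n.+1) stirling2 n.-1 i.-1 * stirling1 i k / i%:R
  = (n%:R)^-1 * ('C(n, k))%:R * bernoulli (n - k).
Proof.
case: n hkn => [|n] hkn; first by move: hk hkn; case: k.
have D0 : Pp n - (Qp n - ((Qp n).[0])%:P) = 0.
  apply: poly_nat0 => m; rewrite !hornerE.
  elim: m => [|m IH]; first by rewrite P0 subrr subr0.
  have h1 := P_diff n m; have h2 := Q_diff n m.
  lra.
have Pk : (Pp n)`_k = (Qp n)`_k.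
  move/eqP: D0; rewrite subr_eq0 => /eqP ->.
  by rewrite coefB coefC; case: k hk {hkn} => // k _; rewrite subr0.
transitivity ((Pp n)`_k); last first.
  by rewrite Pk /Qp coef_poly ltnS hkn /qc; ring.
rewrite /Pp coef_sum /=.
under [RHS]eq_bigr => i _ do rewrite coefZ.
rewrite -(big_mkord xpredT (fun i => stirling2 n i.-1 / i%:R * (falling_poly i)`_k)).
rewrite (@big_cat_nat _ _ _ k 0 n.+2) //=; last by lia.
rewrite [X in _ = X + _]big1_seq ?add0r; last first.
  by move=> i; rewrite mem_index_iota => /andP[_ hi]; rewrite -/(stirling1 i k) stirling1_small ?mulr0.
by apply: eq_bigr => i _; rewrite /stirling1; ring.
Qed.
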